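(* Consider a traffic flow competing with other flows for transmission on a link of constant bit rate $c>0$ under non-preemptive strict priority scheduling (FIFO queues, infinite buffers, initially empty), where the considered flow has the highest priority. Let $l^M$ be the maximum packet length of the highest-priority flow and $l^{M_l}$ the maximum packet length of all lower-priority queues. If the highest-priority flow has token-bucket arrival curve $\alpha(t)=\rho t+\sigma$ with $0\le\rho\le c$, $\sigma\ge0$, then: (i) the output has arrival curve $\rho t+\sigma+\rho\frac{l^M+l^{M_l}}{c}$, i.e. for all $s,t\ge0$, $A^{*}(s,s+t)\le\rho t+\sigma+\frac{\rho}{c}(l^M+l^{M_l})$; (ii) for all $t\ge0$, $B(t)\le\sigma+\frac{\rho}{c}(l^M+l^{M_l})$; (iii) for all $t\ge0$, $D(t)\le\frac{\sigma+l^M+l^{M_l}}{c}$.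
   Context: Non-preemptive strict priority: whenever the link is free and some queue is nonempty, it starts transmitting the head packet of the highest-priority nonempty queue at rate $c$; a transmission is never interrupted. By convention, a packet is said to have arrived (respectively, been served) when and only when its last bit has arrived (respectively, departed). $A(t)$ is the cumulative amount of traffic (sum of packet lengths) of the highest-priority flow arrived in $[0,t)$ and $A^{*}(t)$ the amount served in $[0,t)$; $A(0)=A^{*}(0)=0$, $A(s,t)=A(t)-A(s)$, $A^{*}(s,t)=A^{*}(t)-A^{*}(s)$. The flow has arrival curve $\alpha$ if $A(s,t)\le\alpha(t-s)$ for all $0\le s\le t$. Backlog $B(t)=A(t)-A^{*}(t)$; virtual delay $D(t)=\inf\{\tau\ge0:A(t)\le A^{*}(t+\tau)\}$. *)

(* Defs.v *)
From HB Require Import structures.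
From mathcomp Require Import all_boot all_order all_algebra.
From mathcomp Require Import all_classical all_reals.
From mathcomp Require Import ereal.

Set Implicit Arguments.
Unset Strict Implicit.
Unset Printing Implicit Defensive.

Import Order.TTheory GRing.Theory Num.Theory.
Local Open Scope classical_set_scope.
Local Open Scope ring_scope.

(* Each packet p has
   - an arrival time  a p   (instant its last bit arrives),
   - a length         l p,
   - a priority class cls p (0 = highest priority; the considered flow is
     exactly the set of class-0 packets, all other flows have class >= 1),
   - a start-of-transmission time S p : \bar R (S p = +oo: never started). *)

Section Defs.
Variables (R : realType) (T : choiceType).

(* departure time (last bit leaves): transmission at rate c, never interrupted *)
Definition departure (c : R) (l : T -> R) (S : T -> \bar R) (p : T) : \bar R :=
  (S p + (l p / c)%:E)%E.

Definition transmitting (c : R) (l : T -> R) (S : T -> \bar R) (p : T) (t : R) :=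
  (S p <= t%:E)%E /\ (t%:E < departure c l S p)%E.

Definition np_strict_priority (c : R) (a l : T -> R) (cls : T -> nat)
    (S : T -> \bar R) : Prop :=
  [/\
      (forall p, ((a p)%:E <= S p)%E),
      (forall p q t, p <> q -> transmitting c l S p t ->
                     ~ transmitting c l S q t),
      (* work conservation: link never idle while some queue is nonempty *)
      (forall q t, a q <= t -> (t%:E < S q)%E ->
                   exists p, transmitting c l S p t),
      (forall p q s, S p = s%:E -> (cls q < cls p)%N -> a q < s ->
                     ~ (s%:E < S q)%E) &
      (forall p q s, cls p = cls q -> a p < a q -> S q = s%:E ->
                     (S p < s%:E)%E)].

Definition cum_arrival (a l : T -> R) (cls : T -> nat) (t : R) : R :=
  \sum_(p \in [set p | cls p = 0%N /\ a p < t]) l p.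

Definition cum_service (c : R) (l : T -> R) (cls : T -> nat)
    (S : T -> \bar R) (t : R) : R :=
  \sum_(p \in [set p | cls p = 0%N /\ (departure c l S p < t%:E)%E]) l p.

Definition virtual_delay (A Astar : R -> R) (t : R) : \bar R :=
  ereal_inf (@EFin R @` [set tau | 0 <= tau /\ A t <= Astar (t + tau)]).

End Defs.

(* Main.v *)
Require Import Defs.
From HB Require Import structures.
From mathcomp Require Import all_boot all_order all_algebra.
From mathcomp Require Import all_classical all_reals.
From mathcomp Require Import ereal.
From mathcomp Require Import ring lra finmap.
Import Order.TTheory GRing.Theory Num.Theory.
Local Open Scope classical_set_scope.
Local Open Scope ring_scope.

Lemma fsum_sub (R : realDomainType) (T : choiceType) (A B : set T) (f : T -> R) :
  A `<=` B -> finite_set B -> (forall x, B x -> 0 <= f x) ->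
  \sum_(i \in A) f i <= \sum_(i \in B) f i.
Proof.
move=> AB Bf f0; rewrite (fsbigID A B) //.
have -> : B `&` A = A by apply/setIidr.
rewrite lerDl; apply: fsumr_ge0 => x [Bx _]; exact: f0.
Qed.

Lemma fsum_le_one (R : realDomainType) (T : choiceType) (X : set T) (f : T -> R) b :
  (forall p q, X p -> X q -> p = q) -> (forall p, X p -> f p <= b) -> 0 <= b ->
  \sum_(i \in X) f i <= b.
Proof.
move=> uX fb b0; have [[p Xp]|nX] := pselect (exists p, X p).
  have -> : X = [set p].
    by apply/seteqP; split=> q /=; [move=> Xq; apply: uX | move=> ->].
  by rewrite fsbig_set1; apply: fb.
have -> : X = set0 by apply/seteqP; split=> q //= Xq; apply: nX; exists q.
by rewrite fsbig_set0.
Qed.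

Lemma cover_seq (R : realDomainType) (T : eqType) (s : seq T) (lo hi : T -> R) u v :
  (forall x, u <= x < v -> exists2 p, p \in s & lo p <= x < hi p) ->
  (forall p, p \in s -> lo p <= hi p) ->
  v - u <= \sum_(p <- s) (hi p - lo p).
Proof.
elim: {s}(size s) {-2}s (leqnn (size s)) u => [|n IH] s.
  rewrite leqn0 => /nilP -> u cov _; rewrite big_nil.
  rewrite leNgt; apply/negP; rewrite subr_gt0 => uv.
  have H : u <= u < v by rewrite lexx uv.
  by have [p] := cov u H; rewrite in_nil.
move=> sz u cov lohi.
have [vu|uv] := leP v u.
  apply: le_trans (_ : 0 <= _); first by rewrite subr_le0.
  by rewrite big_seq; apply: sumr_ge0 => p /lohi; rewrite subr_ge0.
have H : u <= u < v by rewrite lexx uv.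
have [p ps /andP[lpu uhp]] := cov u H.
rewrite (big_rem p ps) /=.
have perm := perm_to_rem ps.
have IH' := IH (rem p s) _ (hi p).
have : v - hi p <= \sum_(y <- rem p s) (hi y - lo y).
  apply: IH'.
  - rewrite size_rem //; move: sz; case: (size s) => //.
  - move=> x /andP[hx xv].
    have Hx : u <= x < v by rewrite xv andbT (le_trans (ltW uhp) hx).
    have [q qs /andP[lq qh]] := cov x Hx.
    exists q => //; last by rewrite lq qh.
    move: qs; rewrite (perm_mem perm) inE => /orP[/eqP qp|//].
    by move: qh; rewrite qp ltNge hx.
  - by move=> q /mem_rem /lohi.
lra.
Qed.

Lemma seq_argmin (R : realDomainType) (T : eqType) (s : seq T) (f : T -> R) x0 :
  x0 \in s -> exists2 m, m \in s & forall y, y \in s -> f m <= f y.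
Proof.
elim: s x0 => [//|x s IH] x0 _.
have [[y ys]|ns] := pselect (exists y, y \in s).
  have [m ms mmin] := IH y ys.
  have [fxm|fmx] := leP (f x) (f m).
    exists x; first by rewrite mem_head.
    move=> z; rewrite inE => /orP[/eqP->//|zs]; exact: le_trans fxm (mmin z zs).
  exists m; first by rewrite inE ms orbT.
  move=> z; rewrite inE => /orP[/eqP->|zs]; [exact: ltW | exact: mmin].
exists x; first by rewrite mem_head.
move=> z; rewrite inE => /orP[/eqP->//|zs]; by exfalso; apply: ns; exists z.
Qed.

Lemma fin_argmin (R : realDomainType) (T : choiceType) (X : set T) (f : T -> R) x0 :
  finite_set X -> X x0 -> exists m, X m /\ forall y, X y -> f m <= f y.
Proof.
move=> Xf Xx0.
have x0s : x0 \in fset_set X by rewrite in_fset_set // mem_set.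
have [m ms mmin] := seq_argmin _ _ _ f _ x0s.
exists m; split.
  by move: ms; rewrite in_fset_set // => /set_mem.
by move=> y Xy; apply: mmin; rewrite in_fset_set // mem_set.
Qed.

Lemma arith1 (R : realFieldType) (c rho x L Z : R) :
  0 < c -> 0 <= rho -> rho <= c -> 0 <= x -> 0 <= Z -> c * x - L <= Z ->
  rho * x <= Z + rho / c * L.
Proof.
move=> c0 r0 rc x0 Z0 h.
set k := rho / c.
have rk : rho = k * c by rewrite /k mulfVK // gt_eqF.
have k0 : 0 <= k by rewrite /k divr_ge0 // ltW.
have k1 : k <= 1 by rewrite /k ler_pdivrMr // mul1r.
rewrite rk.
have : k * (c * x - L) <= k * Z by rewrite ler_wpM2l.
nra.
Qed.

Lemma lim_left (R : realFieldType) (u v M : R) :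
  0 <= M -> (forall u', u < u' < v -> v - u' <= M) -> v - u <= M.
Proof.
move=> M0 h; rewrite leNgt; apply/negP => hlt.
have := h (u + (v - u - M) / 2).
have -> : u < u + (v - u - M) / 2 < v.
  apply/andP; split; lra.
move=> /(_ isT); lra.
Qed.
Local Open Scope ereal_scope.
Lemma transP (R : realType) (T : choiceType) (c : R) (l : T -> R) (S : T -> \bar R) p x :
  transmitting c l S p x <-> exists s, S p = s%:E /\ (s <= x)%R /\ (x < s + l p / c)%R.
Proof.
rewrite /transmitting /departure; case: (S p) => [s| |] /=.
- split=> [[h1 h2]|[s' [[<-] [h1 h2]]]].
    by exists s; split=> //; rewrite -lee_fin -lte_fin EFinD.
  by rewrite lee_fin -EFinD lte_fin.
- by split=> [[]|[s [] //]]; rewrite leNgt ltey.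
- by split=> [[_]|[s [] //]]; rewrite /= ltNge leNye.
Qed.

Lemma depP (R : realType) (T : choiceType) (c : R) (a l : T -> R) (S : T -> \bar R) p t :
  (a p)%:E <= S p ->
  (departure c l S p < t%:E <-> exists s, S p = s%:E /\ (s + l p / c < t)%R).
Proof.
rewrite /departure; case: (S p) => [s| |] /= h.
- split=> [h1|[s' [[<-] h2]]].
    by exists s; split=> //; rewrite -lte_fin EFinD.
  by rewrite -EFinD lte_fin.
- by split=> [|[s [] //]]; rewrite ltNge leey.
- by move: h; rewrite leNgt ltNye.
Qed.
Local Close Scope ereal_scope.

Lemma keyK (R : realType) (T : choiceType) (c lM lMl : R) (a l : T -> R)
    (cls : T -> nat) (S : T -> \bar R) :
  0 < c -> 0 <= lM -> 0 <= lMl ->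
  (forall p, 0 < l p) -> (forall p, 0 <= a p) ->
  (forall t, finite_set [set p | a p < t]) ->
  (forall p, cls p = 0%N -> l p <= lM) ->
  (forall p, (0 < cls p)%N -> l p <= lMl) ->
  np_strict_priority c a l cls S ->
  forall v,
  (forall r, cls r = 0%N -> a r < v -> (departure c l S r < v%:E)%E) \/
  exists u, [/\ 0 <= u, u < v, cum_arrival a l cls u <= cum_service c l cls S v &
    c * (v - u) - (lM + lMl) <= cum_service c l cls S v - cum_arrival a l cls u].
Proof.
move=> c0 lM0 lMl0 l0 a0 fin lMb lMlb [hS1 hS2 hS3 hS4 hS5] v.
have [h|h] := pselect (forall r, cls r = 0%N -> a r < v -> (departure c l S r < v%:E)%E).
  by left.
right.
have [q qn] : exists q, ~ (cls q = 0%N -> a q < v -> (departure c l S q < v%:E)%E).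
  by apply/existsNP.
have [q0 q1 q2] : [/\ cls q = 0%N, a q < v & (v%:E <= departure c l S q)%E].
  split.
  - by apply: contrapT => hh; apply: qn => /hh.
  - by apply: contrapT => hh; apply: qn => _ /hh.
  - by rewrite leNgt; apply/negP => hh; apply: qn.
pose in_sys r x := [/\ cls r = 0%N, a r < x & (x%:E < departure c l S r)%E].
pose Cand := [set q | [/\ cls q = 0%N, a q < v &
   forall x, a q < x -> x < v -> exists r, in_sys r x]].
have Cfin : finite_set Cand.
  by apply: sub_finite_set (fin v) => p [].
have Cq : Cand q.
  split=> // x qx xv; exists q; split=> //.
  by apply: lt_le_trans q2; rewrite lte_fin.
have [m [[m0 mv mprop] mmin]] := fin_argmin _ _ _ a _ Cfin Cq.
set u := a m.
have propA : forall r, cls r = 0%N -> a r < u -> (departure c l S r <= u%:E)%E.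
  move=> r r0 ru; rewrite leNgt; apply/negP => ud.
  have Cr : Cand r.
    split=> //; first exact: lt_trans ru mv.
    move=> x rx xv; have [xu|ux] := leP x u.
      by exists r; split=> //; apply: le_lt_trans ud; rewrite lee_fin.
    exact: mprop.
  by have := mmin r Cr; rewrite leNgt ru.
have noLow : forall p s, (0 < cls p)%N -> S p = s%:E -> u < s -> s < v -> False.
  move=> p s pc Sp us sv.
  have [r [r0 rs sr]] := mprop s us sv.
  have Srs : (S r <= s%:E)%E.
    by rewrite leNgt; apply/negP; apply: (hS4 p r s Sp) => //; rewrite r0.
  have rp : r <> p by move=> rp; move: pc; rewrite -rp r0.
  apply: (hS2 r p s rp); first by split.
  split; first by rewrite Sp.
  by rewrite /departure Sp -EFinD lte_fin ltrDl divr_gt0.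
have busy : forall x, u < x -> x < v -> exists p, transmitting c l S p x.
  move=> x ux xv; have [r [r0 rx xr]] := mprop x ux xv.
  have [Srx|xSr] := leP (S r) x%:E.
    by exists r; split.
  by apply: (hS3 r x) => //; apply: ltW.
have lc0 : forall p, 0 <= l p / c by move=> p; rewrite divr_ge0 // ltW.
pose Hfull := [set p | [/\ cls p = 0%N, u <= a p & (departure c l S p < v%:E)%E]].
have Hfin : finite_set Hfull.
  apply: sub_finite_set (fin v) => p [_ _ /(depP _ _ c a l S p v (hS1 p)) [s [Sp sv]]].
  have := hS1 p; rewrite Sp lee_fin /= => aps.
  by apply: le_lt_trans aps _; apply: le_lt_trans sv; rewrite lerDl.
pose X := \sum_(p \in Hfull) l p.
have X0 : 0 <= X by apply: fsumr_ge0 => p _; apply: ltW.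
have cov : forall u', u < u' < v -> v - u' <= (lMl + lM + X) / c.
  move=> u' /andP[uu' u'v].
  pose Gp := [set p | exists x, [/\ u' <= x, x < v & transmitting c l S p x]].
  have Gfin : finite_set Gp.
    apply: sub_finite_set (fin v) => p [x [_ xv /transP [s [Sp [sx _]]]]].
    have := hS1 p; rewrite Sp lee_fin /= => aps.
    by apply: le_lt_trans xv; apply: le_trans sx.
  have c1 : v - u' <= \sum_(p \in Gp) (l p / c).
    rewrite fsbig_finite //.
    have -> : \sum_(p <- fset_set Gp) (l p / c) =
        \sum_(p <- fset_set Gp) ((fine (S p) + l p / c) - fine (S p)).
      by apply: eq_bigr => p _; rewrite [fine _ + _]addrC addrK.
    apply: cover_seq.
    - move=> x /andP[u'x xv]; have [p tp] := busy x (lt_le_trans uu' u'x) xv.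
      exists p; first by rewrite in_fset_set // mem_set //; exists x; split.
      by move/transP: tp => [s [Sp [sx xs]]]; rewrite Sp /= sx xs.
    - by move=> p _; rewrite lerDl.
  pose Z := [set p | cls p = 0%N].
  pose Dv := [set p | (departure c l S p < v%:E)%E].
  rewrite (fsbigID Z Gp) // (fsbigID Dv (Gp `&` Z)) in c1; last exact: finite_setIl.
  have b1 : \sum_(p \in Gp `&` ~` Z) (l p / c) <= lMl / c.
    apply: fsum_le_one; last by rewrite divr_ge0 // ltW.
    - have key : forall p, (Gp `&` ~` Z) p -> exists2 sp, S p = sp%:E & sp <= u /\ u < sp + l p / c.
        move=> p [[x [u'x xv /transP [sp [Sp [spx xsp]]]]] pZ].
        have pc : (0 < cls p)%N by rewrite lt0n; apply/eqP.
        exists sp => //; split; last by lra.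
        rewrite leNgt; apply/negP => usp; apply: (noLow p sp) => //; lra.
      move=> p q' /key [sp Sp [spu usp]] /key [sq Sq [squ usq]].
      apply: contrapT => pq; apply: (hS2 p q' u pq); apply/transP.
        by exists sp.
      by exists sq.
    - move=> p [_ pZ]; apply: ler_wpM2r; first by rewrite invr_ge0 ltW.
      by apply: lMlb; rewrite lt0n; apply/eqP.
  have b2 : \sum_(p \in (Gp `&` Z) `&` ~` Dv) (l p / c) <= lM / c.
    apply: fsum_le_one; last by rewrite divr_ge0 // ltW.
    - have key : forall p, ((Gp `&` Z) `&` ~` Dv) p -> exists2 sp, S p = sp%:E & sp < v /\ v <= sp + l p / c.
        move=> p [[[x [u'x xv /transP [sp [Sp [spx xsp]]]]] pZ] pD].
        exists sp => //; split; first by lra.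
        rewrite leNgt; apply/negP => hh; apply: pD; rewrite /Dv /=.
        by rewrite /departure Sp -EFinD lte_fin.
      move=> p q' /key [sp Sp [spv vsp]] /key [sq Sq [sqv vsq]].
      apply: contrapT => pq.
      have [spq|sqp] := leP sp sq.
        apply: (hS2 p q' sq pq); apply/transP.
          by exists sp; split=> //; split; lra.
        by exists sq; split=> //; split; lra.
      apply: (hS2 p q' sp pq); apply/transP.
        by exists sp; split=> //; split; lra.
      by exists sq; split=> //; split; lra.
    - move=> p [[_ pZ] _]; apply: ler_wpM2r; first by rewrite invr_ge0 ltW.
      exact: lMb.
  have b3 : \sum_(p \in (Gp `&` Z) `&` Dv) (l p / c) <= \sum_(p \in Hfull) (l p / c).
    apply: fsum_sub => //.
    move=> p [[[x [u'x xv tp]] pZ] pD]; split=> //.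
    rewrite leNgt; apply/negP => apu.
    have := propA p pZ apu; rewrite leNgt => /negP; apply.
    case: tp => _; apply: le_lt_trans; rewrite lee_fin; lra.
  have e3 : \sum_(p \in Hfull) (l p / c) = X / c by rewrite /X mulr_fsuml.
  rewrite e3 in b3.
  apply: le_trans c1 _; apply: le_trans (lerD (lerD b3 b2) b1) _.
  rewrite !mulrDl; lra.
have vu := lim_left _ _ _ _ (divr_ge0 (addr_ge0 (addr_ge0 lMl0 lM0) X0) (ltW c0)) cov.
rewrite ler_pdivlMr // mulrC in vu.
have U : cum_arrival a l cls u + X <= cum_service c l cls S v.
  rewrite /cum_arrival /X -fsbigU0 //.
  - apply: fsum_sub.
    + move=> p [[p0 pu]|[p0 up pd]]; split=> //.
      by apply: le_lt_trans (propA p p0 pu) _; rewrite lte_fin.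
    + apply: sub_finite_set (fin v) => p [_ /(depP _ _ c a l S p v (hS1 p)) [s [Sp sv]]].
      have := hS1 p; rewrite Sp lee_fin /= => aps.
      by apply: le_lt_trans aps _; apply: le_lt_trans sv; rewrite lerDl.
    + by move=> p _; apply: ltW.
  - by apply: sub_finite_set (fin u) => p [].
  - by move=> p [[_ pu] [_ up _]]; move: (lt_le_trans pu up); rewrite ltxx.
exists u; split=> //; first by apply: a0.
  lra.
lra.
Qed.

Lemma A_mono (R : realType) (T : choiceType) (a l : T -> R) (cls : T -> nat) s t :
  (forall p, 0 < l p) -> (forall t, finite_set [set p | a p < t]) -> s <= t ->
  cum_arrival a l cls s <= cum_arrival a l cls t.
Proof.
move=> l0 fin st; apply: fsum_sub.
- by move=> p [p0 ps]; split=> //; apply: lt_le_trans st.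
- by apply: sub_finite_set (fin t) => p [].
- by move=> p _; apply: ltW.
Qed.

Lemma As_le_A (R : realType) (T : choiceType) (c : R) (a l : T -> R) (cls : T -> nat) S v :
  0 < c -> (forall p, 0 < l p) -> (forall t, finite_set [set p | a p < t]) ->
  (forall p, ((a p)%:E <= S p)%E) ->
  cum_service c l cls S v <= cum_arrival a l cls v.
Proof.
move=> c0 l0 fin hS1; apply: fsum_sub.
- move=> p [p0 /(depP _ _ c a l S p v (hS1 p)) [s [Sp sv]]]; split=> //.
  have := hS1 p; rewrite Sp lee_fin /= => aps.
  by apply: le_lt_trans aps _; apply: le_lt_trans sv; rewrite lerDl divr_ge0 // ltW.
- by apply: sub_finite_set (fin v) => p [].
- by move=> p _; apply: ltW.
Qed.

Lemma A_le_As (R : realType) (T : choiceType) (c : R) (a l : T -> R) (cls : T -> nat) S v :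
  0 < c -> (forall p, 0 < l p) -> (forall t, finite_set [set p | a p < t]) ->
  (forall p, ((a p)%:E <= S p)%E) ->
  (forall r, cls r = 0%N -> a r < v -> (departure c l S r < v%:E)%E) ->
  cum_arrival a l cls v <= cum_service c l cls S v.
Proof.
move=> c0 l0 fin hS1 h; apply: fsum_sub.
- by move=> p [p0 pv]; split=> //; apply: h.
- apply: sub_finite_set (fin v) => p [p0 /(depP _ _ c a l S p v (hS1 p)) [s [Sp sv]]].
  have := hS1 p; rewrite Sp lee_fin /= => aps.
  by apply: le_lt_trans aps _; apply: le_lt_trans sv; rewrite lerDl divr_ge0 // ltW.
- by move=> p _; apply: ltW.
Qed.

Theorem corollary3 (R : realType) (T : choiceType)
    (c rho sigma lM lMl : R) (a l : T -> R) (cls : T -> nat) (S : T -> \bar R) :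
  0 < c -> 0 <= rho -> rho <= c -> 0 <= sigma ->
  0 <= lM -> 0 <= lMl ->
  (* packets: positive lengths, arrivals at times >= 0 (initially empty),
     finitely many arrivals in any bounded interval *)
  (forall p, 0 < l p) ->
  (forall p, 0 <= a p) ->
  (forall t, finite_set [set p | a p < t]) ->
  (* maximum packet lengths *)
  (forall p, cls p = 0%N -> l p <= lM) ->
  (forall p, (0 < cls p)%N -> l p <= lMl) ->
  (* scheduling discipline *)
  np_strict_priority c a l cls S ->
  (* token-bucket arrival curve of the highest-priority flow *)
  (forall s t, 0 <= s -> s <= t ->
     cum_arrival a l cls t - cum_arrival a l cls s <= rho * (t - s) + sigma) ->
  [/\ (forall s t, 0 <= s -> 0 <= t ->
         cum_service c l cls S (s + t) - cum_service c l cls S s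
           <= rho * t + sigma + rho / c * (lM + lMl)),
      (forall t, 0 <= t ->
         cum_arrival a l cls t - cum_service c l cls S t
           <= sigma + rho / c * (lM + lMl)) &
      (forall t, 0 <= t ->
         (virtual_delay (cum_arrival a l cls) (cum_service c l cls S) t
           <= ((sigma + lM + lMl) / c)%:E)%E)].
Proof.
move=> c0 r0 rc s0 lM0 lMl0 l0 a0 fin lMb lMlb sched arr.
have K := keyK R T c lM lMl a l cls S c0 lM0 lMl0 l0 a0 fin lMb lMlb sched.
have hS1 := sched; case: hS1 => hS1 _ _ _ _.
pose A := cum_arrival a l cls; pose As := cum_service c l cls S.
rewrite -/A -/As in arr K *.
have extra0 : 0 <= rho / c * (lM + lMl).
  by rewrite mulr_ge0 // ?divr_ge0 ?addr_ge0 // ltW.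
split.
- move=> s t s0' t0.
  have h1 : As (s + t) <= A (s + t) by apply: As_le_A.
  have st : s <= s + t by rewrite lerDl.
  have h2 := arr s (s + t) s0' st; have e0 : s + t - s = t by ring.
  rewrite e0 in h2.
  have [h|[u [u0 us Aus hu]]] := K s.
    have h3 : A s <= As s by apply: A_le_As.
    lra.
  have h4 := arr u (s + t) u0 (le_trans (ltW us) st).
  have e : rho * (s + t - u) = rho * t + rho * (s - u) by ring.
  rewrite e in h4.
  have h5 := arith1 _ c rho (s - u) (lM + lMl) (As s - A u) c0 r0 rc
    (ltac:(lra)) (ltac:(lra)) hu.
  lra.
- move=> t t0.
  have [h|[u [u0 ut Aut hu]]] := K t.
    have h3 : A t <= As t by apply: A_le_As.
    lra.
  have h4 := arr u t u0 (ltW ut).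
  have h5 := arith1 _ c rho (t - u) (lM + lMl) (As t - A u) c0 r0 rc
    (ltac:(lra)) (ltac:(lra)) hu.
  lra.
- move=> t t0; apply/lee_addgt0Pr => e e0.
  apply: ereal_inf_le.
  set b := (sigma + lM + lMl) / c.
  have b0 : 0 <= b by rewrite divr_ge0 ?addr_ge0 // ltW.
  exists (b + e)%:E; last by rewrite EFinD.
  exists (b + e) => //; split; first lra.
  set v := t + (b + e).
  have tv : t <= v by rewrite /v lerDl; lra.
  have [h|[u [u0 uv Auv hu]]] := K v.
    apply: le_trans (A_mono _ _ a l cls t v l0 fin tv) _.
    by apply: A_le_As.
  have [tu|ut] := leP t u.
    by apply: le_trans (A_mono _ _ a l cls t u l0 fin tu) Auv.
  have h4 := arr u t u0 (ltW ut).
  have h5 : rho * (t - u) <= c * (t - u) by apply: ler_wpM2r; lra.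
  have e1 : c * (v - u) = c * (t - u) + (sigma + lM + lMl) + c * e.
    rewrite /v /b; field; rewrite gt_eqF //.
  have h6 : 0 <= c * e by rewrite mulr_ge0 // ltW.
  lra.
Qed.
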